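(* Let $b \geq 2$ be an integer and let $a_1a_2a_3\ldots$ be an infinite de Bruijn word over the alphabet $\{0,1,\ldots,b-1\}$. Let $\alpha = 0.a_1a_2a_3\ldots$ be the real number with base-$b$ digits $a_1,a_2,\ldots$, i.e. $\alpha=\sum_{k\ge1}a_k b^{-k}$. Then the sequence $(\{b^n \alpha\})_{n \in \mathbb{N}}$ does not have Poissonian pair correlations.
   Context: $\{x\}$ denotes the fractional part of $x$ and $\|x\|$ the distance from $x$ to the nearest integer. A sequence $(x_n)_{n\in\mathbb{N}}$ in $[0,1)$ has Poissonian pair correlations if for every $s \geq 0$, $F_N(s) := \frac{1}{N}\#\{1 \leq l \neq m \leq N : \|x_l - x_m\| \leq s/N\} \to 2s$ as $N\to\infty$. A (non-cyclic) de Bruijn word of order $m$ over an alphabet $A$ is a word of length $|A|^m+m-1$ in which every word of length $m$ over $A$ occurs (as a factor of consecutive letters) exactly once. An infinite de Bruijn word $w=a_1a_2\ldots$ over an alphabet $A$ with at least three symbols is an infinite word such that for every $m$, $a_1\ldots a_{|A|^m+m-1}$ is a de Bruijn word of order $m$; if the alphabet has two symbols, it is an infinite word such that for every odd $m$, $a_1\ldots a_{|A|^m+m-1}$ is a de Bruijn word of order $m$. *)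

(* Defs.v *)
From Stdlib Require Import Reals Lra Lia List Arith.
Import ListNotations.
Open Scope R_scope.

Definition frac (x : R) : R := frac_part x.

Definition dist_int (x : R) : R := Rmin (frac x) (1 - frac x).

(* #{ 1 <= l <> m <= N : ||x_l - x_m|| <= s/N }, the sequence being indexed
   from 0 in Rocq, so the first N terms are x 0, ..., x (N-1). *)
Definition pair_count (x : nat -> R) (N : nat) (s : R) : nat :=
  length (filter
    (fun p : nat * nat =>
       if Nat.eqb (fst p) (snd p) then false
       else if Rle_dec (dist_int (x (fst p) - x (snd p))) (s / INR N)
            then true else false)
    (list_prod (seq 0 N) (seq 0 N))).

Definition F_N (x : nat -> R) (N : nat) (s : R) : R :=
  / INR N * INR (pair_count x N s).

Definition poissonian_pc (x : nat -> R) : Prop :=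
  forall s : R, 0 <= s -> Un_cv (fun N => F_N x N s) (2 * s).

(* w (0-indexed: w 0 = a_1) restricted to its first b^m+m-1 letters is a
   de Bruijn word of order m over {0,...,b-1}: every word u of length m
   over the alphabet occurs exactly once as a factor, i.e. there is a unique
   start position i with i + m <= b^m + m - 1. *)
Definition debruijn_prefix (b : nat) (w : nat -> nat) (m : nat) : Prop :=
  (forall k, (k < b ^ m + m - 1)%nat -> (w k < b)%nat) /\
  forall u : list nat, length u = m -> Forall (fun d => (d < b)%nat) u ->
    exists! i : nat, (i + m <= b ^ m + m - 1)%nat /\
      forall j : nat, (j < m)%nat -> w (i + j)%nat = nth j u 0%nat.

Definition infinite_debruijn (b : nat) (w : nat -> nat) : Prop :=
  (forall k, (w k < b)%nat) /\
  (if Nat.eqb b 2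
   then forall m : nat, Nat.odd m = true -> debruijn_prefix b w m
   else forall m : nat, debruijn_prefix b w m).

(* Main.v *)
Require Import Defs.
Open Scope nat_scope.
From Stdlib Require Import Reals Lra Lia List Arith ZArith FunctionalExtensionality.
Import ListNotations.

Fixpoint val (b : nat) (w : nat -> nat) (n k : nat) : nat :=
  match k with
  | 0 => 0
  | S k' => w n * b ^ k' + val b w (S n) k'
  end.

Lemma val_lt b w : (forall j, w j < b) -> forall k n, val b w n k < b ^ k.
Proof.
  intros Hw k; induction k as [|k IH]; intros n; simpl; [lia|].
  specialize (IH (S n)); specialize (Hw n). nia.
Qed.

Lemma divmod_uniq a a' B r r' : r < B -> r' < B -> a * B + r = a' * B + r' -> a = a' /\ r = r'.
Proof.
  intros Hr Hr' E.
  destruct (Nat.lt_trichotomy a a') as [H|[H|H]].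
  - exfalso. assert (a * B + B <= a' * B) by nia. lia.
  - subst; lia.
  - exfalso. assert (a' * B + B <= a * B) by nia. lia.
Qed.

Lemma val_inj b w : (forall j, w j < b) -> forall k n n', val b w n k = val b w n' k ->
  forall j, j < k -> w (n + j) = w (n' + j).
Proof.
  intros Hw k; induction k as [|k IH]; intros n n' E j Hj; [lia|].
  simpl in E.
  destruct (divmod_uniq _ _ _ _ _ (val_lt b w Hw k (S n)) (val_lt b w Hw k (S n')) E) as [E1 E2].
  destruct j as [|j].
  - rewrite !Nat.add_0_r; exact E1.
  - specialize (IH _ _ E2 j ltac:(lia)). rewrite <- !plus_n_Sm. simpl in IH. exact IH.
Qed.

Lemma nth_map_seq (f : nat -> nat) m j : j < m -> nth j (map f (seq 0 m)) 0 = f j.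
Proof.
  intros Hj. rewrite (nth_indep _ 0 (f 0)) by (rewrite length_map, length_seq; lia).
  rewrite map_nth, seq_nth by lia. reflexivity.
Qed.

Lemma NoDup_list_prod' {A B : Type} (l : list A) (l' : list B) :
  NoDup l -> NoDup l' -> NoDup (list_prod l l').
Proof.
  intros H1 H2; induction H1 as [|a l Ha Hl IH]; simpl; [constructor|].
  apply NoDup_app; auto.
  - apply NoDup_map_NoDup_ForallPairs; auto. intros x y _ _ E; injection E; auto.
  - intros [x y] Hin Hin2. apply in_map_iff in Hin as [z [Ez _]]. injection Ez as <- <-.
    apply in_prod_iff in Hin2 as [Hx _]. contradiction.
Qed.

Open Scope R_scope.

Fixpoint P (b : nat) (w : nat -> nat) (n : nat) : R :=
  match n with
  | O => 0
  | S k => P b w k + INR (w k) / INR b ^ (k + 1)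
  end.

Definition T b w alpha n := INR b ^ n * (alpha - P b w n).

Lemma bpos b : (2 <= b)%nat -> 0 < INR b.
Proof. intros; apply lt_0_INR; lia. Qed.

Lemma T_rec b w alpha n : (2 <= b)%nat ->
  T b w alpha (S n) = INR b * T b w alpha n - INR (w n).
Proof.
  intros Hb. unfold T. simpl P. rewrite Nat.add_1_r. simpl pow.
  assert (INR b ^ n <> 0) by (apply pow_nonzero; pose proof (bpos b Hb); lra).
  pose proof (bpos b Hb). field. split; lra.
Qed.

Lemma sum_P b w n : sum_f_R0 (fun k => INR (w k) / INR b ^ (k + 1)) n = P b w (S n).
Proof. induction n; simpl; [lra|]. rewrite IHn. simpl. reflexivity. Qed.

Lemma term_nonneg b w k : (2 <= b)%nat -> 0 <= INR (w k) / INR b ^ (k + 1).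
Proof.
  intros Hb. unfold Rdiv. apply Rmult_le_pos; [apply pos_INR|].
  left; apply Rinv_0_lt_compat, pow_lt, bpos, Hb.
Qed.

Lemma P_mono b w n M : (2 <= b)%nat -> (n <= M)%nat -> P b w n <= P b w M.
Proof.
  intros Hb H; induction H; [lra|]. simpl. pose proof (term_nonneg b w m Hb). lra.
Qed.

Lemma P_up b w n M : (2 <= b)%nat -> (forall k, (w k < b)%nat) -> (n <= M)%nat ->
  P b w M <= P b w n + / INR b ^ n - / INR b ^ M.
Proof.
  intros Hb Hw H; induction H; [lra|]. simpl P.
  assert (Hwm : INR (w m) + 1 <= INR b).
  { rewrite <- S_INR. apply le_INR. specialize (Hw m). lia. }
  pose proof (bpos b Hb) as Hb0.
  assert (HB : 0 < INR b ^ m) by (apply pow_lt; lra).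
  assert (E : INR b ^ (m + 1) = INR b * INR b ^ m) by (rewrite Nat.add_1_r; reflexivity).
  rewrite E. simpl pow.
  assert (INR (w m) / (INR b * INR b ^ m) <= (INR b - 1) / (INR b * INR b ^ m)).
  { unfold Rdiv. apply Rmult_le_compat_r; [left; apply Rinv_0_lt_compat; nra | lra]. }
  assert ((INR b - 1) / (INR b * INR b ^ m) = / INR b ^ m - / (INR b * INR b ^ m)) by (field; lra).
  lra.
Qed.

Lemma P_le_alpha b w alpha n : (2 <= b)%nat ->
  infinite_sum (fun k => INR (w k) / INR b ^ (k + 1)) alpha -> P b w n <= alpha.
Proof.
  intros Hb Hs. destruct (Rle_lt_dec (P b w n) alpha) as [|Hlt]; [assumption|].
  exfalso. destruct (Hs (P b w n - alpha)) as [N1 HN1]; [lra|].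
  specialize (HN1 (Nat.max N1 n) ltac:(lia)). rewrite sum_P in HN1.
  pose proof (P_mono b w n (S (Nat.max N1 n)) Hb ltac:(lia)).
  unfold Rdist in HN1. pose proof (Rle_abs (P b w (S (Nat.max N1 n)) - alpha)). lra.
Qed.

Lemma alpha_le b w alpha n : (2 <= b)%nat -> (forall k, (w k < b)%nat) ->
  infinite_sum (fun k => INR (w k) / INR b ^ (k + 1)) alpha ->
  alpha <= P b w n + / INR b ^ n.
Proof.
  intros Hb Hw Hs. destruct (Rle_lt_dec alpha (P b w n + / INR b ^ n)) as [|Hlt]; [assumption|].
  exfalso. destruct (Hs (alpha - (P b w n + / INR b ^ n))) as [N1 HN1]; [lra|].
  specialize (HN1 (Nat.max N1 n) ltac:(lia)). rewrite sum_P in HN1.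
  pose proof (P_up b w n (S (Nat.max N1 n)) Hb Hw ltac:(lia)).
  assert (0 < / INR b ^ S (Nat.max N1 n)) by (apply Rinv_0_lt_compat, pow_lt, bpos, Hb).
  unfold Rdist in HN1. rewrite Rabs_minus_sym in HN1.
  pose proof (Rle_abs (alpha - P b w (S (Nat.max N1 n)))). lra.
Qed.

Lemma T_bounds b w alpha n : (2 <= b)%nat -> (forall k, (w k < b)%nat) ->
  infinite_sum (fun k => INR (w k) / INR b ^ (k + 1)) alpha ->
  0 <= T b w alpha n <= 1.
Proof.
  intros Hb Hw Hs. pose proof (P_le_alpha b w alpha n Hb Hs).
  pose proof (alpha_le b w alpha n Hb Hw Hs).
  assert (HB : 0 < INR b ^ n) by (apply pow_lt, bpos, Hb).
  unfold T. split.
  - apply Rmult_le_pos; lra.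
  - replace 1 with (INR b ^ n * / INR b ^ n) by (field; lra).
    apply Rmult_le_compat_l; lra.
Qed.

Lemma T_step b w alpha j : (2 <= b)%nat -> (forall k, (w k < b)%nat) ->
  infinite_sum (fun k => INR (w k) / INR b ^ (k + 1)) alpha ->
  T b w alpha j = 1 -> T b w alpha (S j) = 1 /\ w j = (b-1)%nat.
Proof.
  intros Hb Hw Hs H.
  rewrite T_rec by exact Hb. rewrite H.
  destruct (T_bounds b w alpha (S j) Hb Hw Hs) as [_ H1]. rewrite T_rec in H1 by exact Hb. rewrite H in H1.
  assert (Hwm : INR (w j) + 1 <= INR b) by (rewrite <- S_INR; apply le_INR; specialize (Hw j); lia).
  assert (E : INR (S (w j)) = INR b) by (rewrite S_INR; lra).
  apply INR_eq in E. split; [lra| lia].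
Qed.

Lemma T_lt1 b w alpha n : (2 <= b)%nat -> (forall k, (w k < b)%nat) ->
  infinite_sum (fun k => INR (w k) / INR b ^ (k + 1)) alpha ->
  ~ (forall k, (n <= k)%nat -> w k = (b - 1)%nat) ->
  T b w alpha n < 1.
Proof.
  intros Hb Hw Hs Hnt. destruct (T_bounds b w alpha n Hb Hw Hs) as [_ [H|H]]; [exact H|].
  exfalso. apply Hnt.
  assert (Hall : forall k, T b w alpha (n + k)%nat = 1).
  { induction k as [|k IH].
    - rewrite Nat.add_0_r. exact H.
    - rewrite <- plus_n_Sm. apply (T_step b w alpha _ Hb Hw Hs IH). }
  intros k Hk. replace k with (n + (k - n))%nat by lia. apply (T_step b w alpha _ Hb Hw Hs (Hall _)).
Qed.

Fixpoint Q (b : nat) (w : nat -> nat) (n : nat) : nat :=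
  match n with O => O | S k => (b * Q b w k + w k)%nat end.

Lemma T_int b w alpha n : (2 <= b)%nat ->
  INR b ^ n * alpha = INR (Q b w n) + T b w alpha n.
Proof.
  intros Hb. unfold T.
  assert (INR b ^ n * P b w n = INR (Q b w n)).
  { induction n as [|n IH]; simpl; [lra|].
    rewrite plus_INR, mult_INR, <- IH. rewrite Nat.add_1_r. simpl pow.
    assert (INR b ^ n <> 0) by (apply pow_nonzero; pose proof (bpos b Hb); lra).
    pose proof (bpos b Hb). field. split; lra. }
  lra.
Qed.

Lemma frac_part_nat (q : nat) (t : R) : 0 <= t < 1 -> frac_part (INR q + t) = t.
Proof.
  intros Ht. unfold frac_part.
  destruct (base_Int_part (INR q + t)) as [H1 H2].
  set (z := Int_part (INR q + t)) in *.
  rewrite INR_IZR_INZ in *.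
  assert (A1 : IZR z < IZR (Z.of_nat q + 1)) by (rewrite plus_IZR; simpl; lra).
  assert (A2 : IZR (Z.of_nat q - 1) < IZR z) by (rewrite minus_IZR; simpl; lra).
  apply lt_IZR in A1. apply lt_IZR in A2.
  assert (Ez : z = Z.of_nat q) by lia. rewrite Ez. lra.
Qed.

Lemma T_shift b w alpha : (2 <= b)%nat -> forall k n,
  T b w alpha n * INR b ^ k = INR (val b w n k) + T b w alpha (n + k)%nat.
Proof.
  intros Hb k; induction k as [|k IH]; intros n.
  - simpl. rewrite Nat.add_0_r. lra.
  - simpl pow. simpl val. rewrite plus_INR, mult_INR, pow_INR.
    pose proof (T_rec b w alpha n Hb). specialize (IH (S n)).
    rewrite <- plus_n_Sm. simpl plus in IH |- *.
    replace (T b w alpha n * (INR b * INR b ^ k)) with ((T b w alpha n * INR b) * INR b ^ k) by ring.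
    replace (T b w alpha n * INR b) with (INR (w n) + T b w alpha (S n)) by lra.
    rewrite Rmult_plus_distr_r, IH. ring.
Qed.


Definition succN (N j : nat) : nat := if Nat.eqb (j + 1) N then 0%nat else (j + 1)%nat.

Lemma kcases (a b k N : Z) : (0 <= a < N)%Z -> (0 <= b < N)%Z ->
  (-N < a - b - k * N < N)%Z -> (k = 0 \/ k = 1 \/ k = -1)%Z.
Proof.
  intros Ha Hb H.
  destruct (Z_le_gt_dec k (-2)) as [H1|H1]; [exfalso; nia|].
  destruct (Z_le_gt_dec 2 k) as [H2|H2]; [exfalso; nia|]. lia.
Qed.

Lemma geom (N cl cl' : nat) (xl xl' fl fl' s : R) :
  (0 < N)%nat -> (cl < N)%nat -> (cl' < N)%nat -> cl <> cl' ->
  xl * INR N = INR cl + fl -> xl' * INR N = INR cl' + fl' ->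
  0 <= fl < 1 -> 0 <= fl' < 1 -> 0 < s < 1 ->
  dist_int (xl - xl') <= s / INR N ->
  (cl = succN N cl' /\ 1 - s <= fl' - fl) \/ (cl' = succN N cl /\ 1 - s <= fl - fl').
Proof.
  intros HN Hc Hc' Hneq Ex Ex' Hf Hf' Hs Hd.
  assert (HNR : 0 < INR N) by (apply lt_0_INR; exact HN).
  unfold dist_int, frac, frac_part in Hd.
  set (y := xl - xl') in *. set (z := Int_part y) in *.
  destruct (base_Int_part y) as [B1 B2]. fold z in B1, B2.
  assert (Hk : exists k : Z, - (s / INR N) <= y - IZR k <= s / INR N).
  { destruct (Rle_dec (y - IZR z) (1 - (y - IZR z))) as [Hle|Hle].
    - rewrite Rmin_left in Hd by exact Hle. exists z.
      assert (0 <= s / INR N) by (unfold Rdiv; apply Rmult_le_pos; [lra | left; apply Rinv_0_lt_compat; lra]).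
      lra.
    - rewrite Rmin_right in Hd by lra. exists (z + 1)%Z. rewrite plus_IZR.
      assert (0 <= s / INR N) by (unfold Rdiv; apply Rmult_le_pos; [lra | left; apply Rinv_0_lt_compat; lra]).
      simpl. lra. }
  destruct Hk as [k [Hk1 Hk2]].
  assert (M1 : (y - IZR k) * INR N <= s).
  { replace s with (s / INR N * INR N) by (field; lra). apply Rmult_le_compat_r; lra. }
  assert (M2 : - s <= (y - IZR k) * INR N).
  { replace (- s) with (- (s / INR N) * INR N) by (field; lra). apply Rmult_le_compat_r; lra. }
  set (t := (Z.of_nat cl - Z.of_nat cl' - k * Z.of_nat N)%Z).
  assert (Et : IZR t = (y - IZR k) * INR N - fl + fl').
  { unfold t, y. rewrite !minus_IZR, mult_IZR, <- !INR_IZR_INZ.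
    replace ((xl - xl' - IZR k) * INR N) with (xl * INR N - xl' * INR N - IZR k * INR N) by ring.
    rewrite Ex, Ex'. ring. }
  assert (T1 : IZR t < IZR 2) by (simpl; lra).
  assert (T2 : IZR (-2) < IZR t) by (simpl; lra).
  apply lt_IZR in T1. apply lt_IZR in T2.
  assert (Hcases : t = (-1)%Z \/ t = 0%Z \/ t = 1%Z) by lia.
  destruct Hcases as [Ht|[Ht|Ht]]; rewrite Ht in Et; simpl in Et.
  - right. split; [|lra].
    assert (k = 0 \/ k = 1 \/ k = -1)%Z by (apply (kcases (Z.of_nat cl) (Z.of_nat cl') k (Z.of_nat N)); unfold t in Ht; lia).
    unfold succN. destruct (Nat.eqb_spec (cl + 1) N); unfold t in Ht; destruct H as [H|[H|H]]; subst k; lia.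
  - exfalso. assert (k = 0 \/ k = 1 \/ k = -1)%Z by (apply (kcases (Z.of_nat cl) (Z.of_nat cl') k (Z.of_nat N)); unfold t in Ht; lia).
    unfold t in Ht; destruct H as [H|[H|H]]; subst k; lia.
  - left. split; [|lra].
    assert (k = 0 \/ k = 1 \/ k = -1)%Z by (apply (kcases (Z.of_nat cl) (Z.of_nat cl') k (Z.of_nat N)); unfold t in Ht; lia).
    unfold succN. destruct (Nat.eqb_spec (cl' + 1) N); unfold t in Ht; destruct H as [H|[H|H]]; subst k; lia.
Qed.


Definition posf (c : nat -> nat) (N j : nat) : nat :=
  hd 0%nat (filter (fun n => Nat.eqb (c n) j) (seq 0 N)).

Lemma posf_spec (c : nat -> nat) N n : (n < N)%nat ->
  (forall a a', (a < N)%nat -> (a' < N)%nat -> c a = c a' -> a = a') ->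
  posf c N (c n) = n.
Proof.
  intros Hn Hinj. unfold posf.
  assert (Hin : In n (filter (fun n' => Nat.eqb (c n') (c n)) (seq 0 N))).
  { apply filter_In. split; [apply in_seq; lia | apply Nat.eqb_refl]. }
  destruct (filter (fun n' => Nat.eqb (c n') (c n)) (seq 0 N)) as [|h t] eqn:E; [destruct Hin|].
  simpl. assert (Hh : In h (filter (fun n' => Nat.eqb (c n') (c n)) (seq 0 N))) by (rewrite E; left; auto).
  apply filter_In in Hh as [Hh1 Hh2]. apply in_seq in Hh1. apply Nat.eqb_eq in Hh2.
  apply Hinj; lia.
Qed.

Definition sumL (f : nat -> R) (l : list nat) : R := fold_right (fun j acc => f j + acc) 0 l.

Lemma sumL_app f l1 l2 : sumL f (l1 ++ l2) = sumL f l1 + sumL f l2.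
Proof. induction l1; simpl; [lra|]. rewrite IHl1. lra. Qed.

Lemma sumL_ext f g l : (forall j, In j l -> f j = g j) -> sumL f l = sumL g l.
Proof. induction l; intros H; simpl; [lra|]. rewrite H by (left; auto). rewrite IHl by (intros; apply H; right; auto). lra. Qed.

Lemma tel (g : nat -> R) K a : sumL (fun j => g j - g (S j)) (seq a K) = g a - g (a + K)%nat.
Proof.
  revert a; induction K; intros a; simpl.
  - rewrite Nat.add_0_r. lra.
  - rewrite IHK. rewrite <- plus_n_Sm. simpl. lra.
Qed.

Lemma telescope (g : nat -> R) N : (0 < N)%nat -> sumL (fun j => g j - g (succN N j)) (seq 0 N) = 0.
Proof.
  intros HN. destruct N as [|K]; [lia|].
  rewrite seq_S, sumL_app. simpl.
  rewrite (sumL_ext _ (fun j => g j - g (S j))).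
  - rewrite tel. unfold succN. rewrite Nat.add_0_l.
    replace (Nat.eqb (K + 1) (S K)) with true by (symmetry; apply Nat.eqb_eq; lia). simpl. lra.
  - intros j Hj. apply in_seq in Hj. unfold succN.
    replace (Nat.eqb (j + 1) (S K)) with false by (symmetry; apply Nat.eqb_neq; lia).
    rewrite Nat.add_1_r. reflexivity.
Qed.

Definition cnt (d : nat -> R) (t : R) (l : list nat) : nat :=
  length (filter (fun j => if Rle_dec t (d j) then true else false) l).

Lemma ineq (d : nat -> R) (s1 s2 : R) l : 1 - s1 = /2 -> 1 - s2 = /10 -> (forall j, -1 < d j) ->
  2/5 * INR (cnt d (1 - s1) l) + 11/10 * INR (cnt d (1 - s2) l) - INR (length l) <= sumL d l.
Proof.
  intros E1 E2 Hd. unfold cnt. rewrite E1, E2. induction l as [|j l IH]; [simpl; lra|].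
  specialize (Hd j). cbn [filter sumL fold_right length]. fold (sumL d l).
  destruct (Rle_dec (/2) (d j)); destruct (Rle_dec (/10) (d j)); cbn [length]; rewrite ?S_INR; lra.
Qed.

Lemma pair_count_bound (x : nat -> R) (N : nat) (s : R) (c : nat -> nat) (f : nat -> R) :
  (0 < N)%nat -> (forall n, (n < N)%nat -> (c n < N)%nat) ->
  (forall a a', (a < N)%nat -> (a' < N)%nat -> c a = c a' -> a = a') ->
  (forall n, x n * INR N = INR (c n) + f n) -> (forall n, 0 <= f n < 1) -> 0 < s < 1 ->
  (pair_count x N s <= 2 * cnt (fun j => (f (posf c N j) - f (posf c N (succN N j)))%R) (1 - s)%R (seq 0 N))%nat.
Proof.
  intros HN Hc Hinj Hx Hf Hs. unfold pair_count, cnt.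
  set (Q := fun j => if Rle_dec (1 - s) (f (posf c N j) - f (posf c N (succN N j))) then true else false).
  set (G := fun j => [(posf c N (succN N j), posf c N j); (posf c N j, posf c N (succN N j))]).
  assert (Hlen : length (flat_map G (filter Q (seq 0 N))) = (2 * length (filter Q (seq 0 N)))%nat).
  { rewrite (flat_map_constant_length (c := 2%nat)); [lia|]. intros; reflexivity. }
  rewrite <- Hlen. apply NoDup_incl_length.
  - apply NoDup_filter, NoDup_list_prod'; apply seq_NoDup.
  - intros [l l'] Hin. apply filter_In in Hin as [Hin HP].
    apply in_prod_iff in Hin as [Hl Hl']. apply in_seq in Hl, Hl'. simpl in HP.
    destruct (Nat.eqb_spec l l') as [|Hneq]; [discriminate|].
    destruct (Rle_dec _ _) as [Hd|]; [|discriminate].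
    assert (Hcn : c l <> c l') by (intros E; apply Hneq, Hinj; lia).
    destruct (geom N (c l) (c l') (x l) (x l') (f l) (f l') s HN (Hc l ltac:(lia)) (Hc l' ltac:(lia))
                Hcn (Hx l) (Hx l') (Hf l) (Hf l') Hs Hd) as [[E1 E2]|[E1 E2]].
    + apply in_flat_map. exists (c l'). split.
      * apply filter_In. split; [apply in_seq; specialize (Hc l' ltac:(lia)); lia|].
        unfold Q. rewrite <- E1, !posf_spec by (auto; lia).
        destruct (Rle_dec _ _); [reflexivity | lra].
      * unfold G. rewrite <- E1, !posf_spec by (auto; lia). left; reflexivity.
    + apply in_flat_map. exists (c l). split.
      * apply filter_In. split; [apply in_seq; specialize (Hc l ltac:(lia)); lia|].
        unfold Q. rewrite <- E1, !posf_spec by (auto; lia).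
        destruct (Rle_dec _ _); [reflexivity | lra].
      * unfold G. rewrite <- E1, !posf_spec by (auto; lia). right; left; reflexivity.
Qed.

Lemma get_m b w : infinite_debruijn b w -> forall K, exists m, (K <= m)%nat /\ debruijn_prefix b w m.
Proof.
  intros [_ Hdb] K. exists (2 * K + 1)%nat. split; [lia|].
  destruct (Nat.eqb b 2); apply Hdb; auto.
  apply Nat.odd_spec. exists K. lia.
Qed.

Lemma no_tail b w : (2 <= b)%nat -> infinite_debruijn b w ->
  forall n0, ~ (forall k, (n0 <= k)%nat -> w k = (b - 1)%nat).
Proof.
  intros Hb Hdb n0 H.
  destruct (get_m b w Hdb (n0 + 2)) as [m [Hm [_ Hdp]]].
  pose proof (Nat.pow_gt_lin_r b m ltac:(lia)) as Hbm.
  destruct (Hdp (repeat (b - 1)%nat m)) as [i [_ Hu]].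
  - apply repeat_length.
  - apply Forall_forall. intros y Hy. apply repeat_spec in Hy. lia.
  - assert (E1 : i = n0).
    { apply Hu. split; [lia|]. intros j Hj. rewrite nth_repeat_lt by exact Hj. apply H; lia. }
    assert (E2 : i = S n0).
    { apply Hu. split; [lia|]. intros j Hj. rewrite nth_repeat_lt by exact Hj. apply H; lia. }
    lia.
Qed.

Lemma mul_lt_inv (NR a c : R) : 0 < NR -> a < / NR * c -> a * NR < c.
Proof.
  intros H1 H2. apply (Rmult_lt_compat_r NR) in H2; [|exact H1].
  replace (/ NR * c * NR) with c in H2 by (field; lra). exact H2.
Qed.

Theorem theorem2 (b : nat) (w : nat -> nat) (alpha : R) :
  (2 <= b)%nat ->
  infinite_debruijn b w ->
  infinite_sum (fun k : nat => INR (w k) / INR b ^ (k + 1)) alpha ->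
  ~ poissonian_pc (fun n : nat => frac (INR b ^ n * alpha)).
Proof.
  intros Hb Hdb Hs HP.
  pose proof Hdb as [Hw _].
  assert (Tb : forall n, 0 <= T b w alpha n < 1).
  { intros n. split; [apply (T_bounds b w alpha n Hb Hw Hs)|].
    apply T_lt1; auto. apply (no_tail b w Hb Hdb). }
  assert (Hx : (fun n : nat => frac (INR b ^ n * alpha)) = T b w alpha).
  { apply FunctionalExtensionality.functional_extensionality. intros n.
    unfold frac. rewrite (T_int b w alpha n Hb). apply frac_part_nat, Tb. }
  rewrite Hx in HP.
  destruct (HP (/2) ltac:(lra) (/10) ltac:(lra)) as [N1 HN1].
  destruct (HP (9/10) ltac:(lra) (/10) ltac:(lra)) as [N2 HN2].
  destruct (get_m b w Hdb (N1 + N2)) as [m [Hm Hdp]].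
  pose proof (Nat.pow_gt_lin_r b m ltac:(lia)) as Hbm.
  set (N := (b ^ m)%nat) in *.
  specialize (HN1 N ltac:(lia)). specialize (HN2 N ltac:(lia)).
  set (c := fun n => val b w n m).
  set (f := fun n => T b w alpha (n + m)).
  assert (HN : (0 < N)%nat) by lia.
  assert (HNR : 0 < INR N) by (apply lt_0_INR; exact HN).
  assert (Hc : forall n, (n < N)%nat -> (c n < N)%nat) by (intros n _; apply val_lt; exact Hw).
  assert (Hinj : forall a a', (a < N)%nat -> (a' < N)%nat -> c a = c a' -> a = a').
  { intros a a' Ha Ha' E. destruct Hdp as [_ Hdp].
    pose proof (val_inj b w Hw m a a' E) as Hvj.
    destruct (Hdp (map (fun j => w (a + j)%nat) (seq 0 m))) as [i [_ Hu]].
    - rewrite length_map, length_seq. reflexivity.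
    - apply Forall_forall. intros y Hy. apply in_map_iff in Hy as [z [<- _]]. apply Hw.
    - assert (i = a) by (apply Hu; split; [lia|]; intros j Hj; rewrite nth_map_seq; auto).
      assert (i = a') by (apply Hu; split; [lia|]; intros j Hj; rewrite nth_map_seq; auto; symmetry; auto).
      lia. }
  assert (HxN : forall n, T b w alpha n * INR N = INR (c n) + f n).
  { intros n. unfold N, c, f. rewrite pow_INR. apply T_shift, Hb. }
  assert (Hf : forall n, 0 <= f n < 1) by (intros n; apply Tb).
  set (d := fun j => (f (posf c N j) - f (posf c N (succN N j)))%R).
  pose proof (pair_count_bound (T b w alpha) N (/2) c f HN Hc Hinj HxN Hf ltac:(lra)) as B1.
  pose proof (pair_count_bound (T b w alpha) N (9/10) c f HN Hc Hinj HxN Hf ltac:(lra)) as B2.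
  fold d in B1, B2.
  apply le_INR in B1. apply le_INR in B2. rewrite mult_INR in B1, B2.
  unfold Rdist, F_N in HN1, HN2.
  pose proof (Rle_abs (2 * / 2 - / INR N * INR (pair_count (T b w alpha) N (/ 2)))) as A1.
  pose proof (Rle_abs (2 * (9/10) - / INR N * INR (pair_count (T b w alpha) N (9/10)))) as A2.
  rewrite Rabs_minus_sym in HN1, HN2.
  assert (C1 : 2 * /2 - /10 < / INR N * INR (pair_count (T b w alpha) N (/ 2))) by lra.
  assert (C2 : 2 * (9/10) - /10 < / INR N * INR (pair_count (T b w alpha) N (9/10))) by lra.
  apply mul_lt_inv in C1; [|exact HNR]. apply mul_lt_inv in C2; [|exact HNR].
  pose proof (ineq d (/2) (9/10) (seq 0 N) ltac:(lra) ltac:(lra)) as I.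
  assert (Hd : forall j, -1 < d j) by (intros j; unfold d; pose proof (Hf (posf c N j)); pose proof (Hf (posf c N (succN N j))); lra).
  specialize (I Hd).
  assert (Z0 : sumL d (seq 0 N) = 0) by exact (telescope (fun j => f (posf c N j)) N HN). rewrite Z0 in I.
  rewrite length_seq in I. simpl INR in B1, B2.
  lra.
Qed.
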